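(* Let $C$ be a complex scheme of even type and $p$ an odd prime. 1. If $\Lambda^-\not\equiv\Lambda^+\pmod p$, then $\mathfrak Z_{\vec c,p}$ has no edges, and each of its vertices is indexed by a region other than the outer region $R_1$. 2. If $\Lambda^-\equiv\Lambda^+\pmod p$, then: - $\mathfrak Z_{\vec c,p}$ contains $u_1,u_2,u_3$ and the edges $u_1u_2$ and $u_1u_3$; - $\mathfrak Z_{\vec c,p}$ contains $R_1$ and the edge $u_1R_1$ if and only if $\Pi^+_o-\Pi^-_o\equiv1\pmod p$ for every outer oval $o$; - $\mathfrak Z_{\vec c,p}$ contains no other edges, and its only other possible vertices are indexed by regions other than $R_1$.
   Context: A complex scheme $C$ in $\mathbb{R}P^2$ is a finite collection of disjoint smooth simple closed curves, up to isotopy, at most one of which is one-sided. The two-sided components are ovals, and $C$ carries a semi-orientation. $C$ has even type if it has no one-sided component; then an auxiliary oriented one-sided curve $J$ disjoint from the ovals is fixed. Numerical characteristics: - Regions are the components of $\mathbb{R}P^2\setminus(C\cup J)$, and the outer region $R_1$ is the one whose closure meets $J$. Outer ovals are those in the boundary of $R_1$. The parity $\mathrm{par}$ of a region or oval is the parity of the number of ovals crossed to reach $R_1$. - For an oval $o$ bounding a disk $D_o$ and $x\in\mathrm{int}D_o$, one has $[o]=\pm2[J]$ in $H_1(\mathbb{R}P^2\setminus\{x\})$; $o$ is negative if $[o]=2[J]$, positive otherwise, and $\epsilon(o)=\pm1$ accordingly. $\Lambda^\pm$ is the number of positive/negative ovals. - Two ovals form an injective pair if they bound an annulus. The pair is positive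 if their orientations are the boundary orientation of some orientation of the annulus, and negative otherwise. $\Pi^\pm_o$ is the number of ovals forming a positive/negative injective pair with $o$. $\Gamma=\Gamma(C)$ is the weighted tree with vertices $R$ (weight $2\chi(R)$) for each region, $o$ (weight $0$) for each oval, and $u_1,u_2,u_3$ (weights $1,2,2$). Its edges are $Ro$ for $o\subset\partial R$, and $u_1u_2$, $u_1u_3$, $u_1R_1$. In the even type case its arrows are one arrow at each oval $o$, of sign $(-1)^{\mathrm{par}(o)+1}\epsilon(o)$. $A_\Gamma$ has the weights on the diagonal and $1$ for adjacent vertices, $0$ otherwise. Derived quantities. - $\vec s$ has entry $\pm1$ at the tail of a $\pm$ arrow and $0$ elsewhere; $\vec c=-2\vec sA_\Gamma^{-1}$. - $\Gamma^+$ is obtained by converting arrows into edges and arrowheads into new weight-$0$ vertices, and $\vec c^{\,+}$ extends $\vec c$ by $\pm2$ (the arrow sign) at the new vertices. - $\mathfrak Z_{\vec c,p}$ is the subgraph of $\Gamma$ whose vertices are the $v\in v(\Gamma)$ with $\vec c_v\equiv0\pmod p$ that are not joined by an edge of $\Gamma^+$ to any $w$ with $\vec c^{\,+}_w\not\equiv0\pmod p$; its edges are the edges of $\Gamma$ among these vertices. *)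

(* Defs.v *)
From HB Require Import structures.
From mathcomp Require Import all_boot all_order all_algebra.
Set Implicit Arguments. Unset Strict Implicit. Unset Printing Implicit Defensive.
Import Order.TTheory GRing.Theory Num.Theory.
Local Open Scope ring_scope.

(* A complex scheme of even type with n ovals, indexed by 'I_n, is     *)
(* encoded (up to isotopy) by                                          *)
(*  - parent : 'I_n -> option 'I_n : parent o = Some o' iff o lies     *)
(*    immediately inside the disk D_o' (no oval in between);           *)
(*    parent o = None iff o is an outer oval;                          *)
(*  - eps : 'I_n -> bool : eps o = true iff o is positive (epsilon=+1),*)
(*    false iff o is negative ([o] = 2[J], epsilon = -1).              *)

Section Scheme.
Variables (n : nat) (parent : 'I_n -> option 'I_n) (eps : 'I_n -> bool).

Fixpoint itp (k : nat) (i : 'I_n) : option 'I_n :=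
  if k is k'.+1 then obind parent (itp k' i) else Some i.

(* j is a strict ancestor of i : the oval i lies inside the disk D_j *)
Definition anc (j i : 'I_n) : bool := [exists k : 'I_n, itp k.+1 i == Some j].

(* par(o): number of ovals crossed going from o to the outer region R_1 *)
Definition depth (i : 'I_n) : nat := #|[pred j | anc j i]|.

Definition outer (i : 'I_n) : bool := parent i == None.

Definition epsZ (o : 'I_n) : int := if eps o then 1 else -1.

Definition Lambda_pos : nat := #|[pred o | eps o]|.
Definition Lambda_neg : nat := #|[pred o | ~~ eps o]|.

(* injective pairs: one oval inside the disk of the other; the pair is
   positive iff the orientations are the boundary orientation of the
   annulus, which amounts to eps o != eps o'. *)
Definition injective_pair (o o' : 'I_n) : bool := anc o o' || anc o' o.
Definition positive_pair (o o' : 'I_n) : bool :=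
  injective_pair o o' && (eps o != eps o').
Definition negative_pair (o o' : 'I_n) : bool :=
  injective_pair o o' && (eps o == eps o').
Definition Pi_pos (o : 'I_n) : nat := #|[pred o' | positive_pair o o']|.
Definition Pi_neg (o : 'I_n) : nat := #|[pred o' | negative_pair o o']|.

End Scheme.

(* Vertices of Gamma: regions (Reg None = outer region R_1,            *)
(* Reg (Some i) = region inside D_i just outside the child disks),      *)
(* ovals, and u_1, u_2, u_3 (U 0, U 1, U 2).                           *)
Inductive vertex (n : nat) :=
  | Reg of option 'I_n
  | Ov of 'I_n
  | U of 'I_3.
Arguments Reg {n} _.
Arguments Ov {n} _.
Arguments U {n} _.

Section VertexFin.
Variable n : nat.
Definition vcode (v : vertex n) : (option 'I_n + 'I_n + 'I_3)%type :=
  match v with Reg r => inl (inl r) | Ov o => inl (inr o) | U a => inr a end.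
Definition vdecode (x : (option 'I_n + 'I_n + 'I_3)%type) : vertex n :=
  match x with inl (inl r) => Reg r | inl (inr o) => Ov o | inr a => U a end.
Lemma vcodeK : cancel vcode vdecode. Proof. by case. Qed.
HB.instance Definition _ := Finite.copy (vertex n) (can_type vcodeK).
End VertexFin.

Definition R1 {n} : vertex n := Reg None.
Definition u1 {n} : vertex n := U (@Ordinal 3 0 isT).
Definition u2 {n} : vertex n := U (@Ordinal 3 1 isT).
Definition u3 {n} : vertex n := U (@Ordinal 3 2 isT).

Section Gamma.
Variables (n : nat) (parent : 'I_n -> option 'I_n) (eps : 'I_n -> bool).

Definition bounds (r : option 'I_n) (o : 'I_n) : bool :=
  match r with
  | None => parent o == None
  | Some i => (o == i) || (parent o == Some i)
  end.

(* Euler characteristic of a region: R_1 is the disk RP^2 \ J minus the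
   outer closed disks; Reg (Some i) is the disk D_i minus the closed disks
   of the ovals immediately inside o_i. *)
Definition chi (r : option 'I_n) : int :=
  match r with
  | None => 1 - (#|[pred o | parent o == None]|)%:Z
  | Some i => 1 - (#|[pred o | parent o == Some i]|)%:Z
  end.

Definition weight (v : vertex n) : int :=
  match v with
  | Reg r => 2 * chi r
  | Ov _ => 0
  | U a => if val a == 0%N then 1 else 2
  end.

Definition isU0 (a : 'I_3) := val a == 0%N.
Definition adj (v w : vertex n) : bool :=
  match v, w with
  | Reg r, Ov o => bounds r o
  | Ov o, Reg r => bounds r o
  | U a, U b => (isU0 a && ~~ isU0 b) || (isU0 b && ~~ isU0 a)
  | U a, Reg None => isU0 a
  | Reg None, U a => isU0 a
  | _, _ => false
  end.

Definition NV := #|{: vertex n}|.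

Definition AGamma : 'M[rat]_NV :=
  \matrix_(i, j)
    (if enum_val i == enum_val j then (weight (enum_val i))%:~R
     else if adj (enum_val i) (enum_val j) then 1 else 0).

Definition asign (o : 'I_n) : int := (-1) ^+ (depth parent o).+1 * epsZ eps o.

Definition svec : 'rV[rat]_NV :=
  \row_j (match enum_val j with Ov o => (asign o)%:~R | _ => 0 end).

Definition cvec : 'rV[rat]_NV := (-2) *: (svec *m invmx AGamma).
Definition c (v : vertex n) : rat := cvec 0 (enum_rank v).

(* Gamma^+ : vertices of Gamma plus one arrowhead vertex per oval *)
Definition vertexp := (vertex n + 'I_n)%type.
Definition adjp (x y : vertexp) : bool :=
  match x, y with
  | inl v, inl w => adj v w
  | inl (Ov o), inr o' => o == o'
  | inr o', inl (Ov o) => o == o'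
  | _, _ => false
  end.
Definition cplus (x : vertexp) : rat :=
  match x with inl v => c v | inr o => (2 * asign o)%:~R end.

End Gamma.

(* congruence to 0 modulo p for a rational number (in Z_(p)) *)
Definition zero_mod (p : nat) (q : rat) : bool := (p%:Z %| numq q)%Z.

Section Zgraph.
Variables (n : nat) (parent : 'I_n -> option 'I_n) (eps : 'I_n -> bool) (p : nat).

Definition inZ (v : vertex n) : bool :=
  zero_mod p (c parent eps v) &&
  [forall w : vertexp n, adjp parent (inl v) w ==> zero_mod p (cplus parent eps w)].

Definition Zedge (v w : vertex n) : bool :=
  [&& inZ v, inZ w & adj parent v w].

End Zgraph.

(* Main.v *)
Require Import Defs.
From HB Require Import structures.
From mathcomp Require Import all_boot all_order all_algebra.
From mathcomp Require Import zify ring lra.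
Import Order.TTheory GRing.Theory Num.Theory.

Module Aux.
Set Implicit Arguments. Unset Strict Implicit. Unset Printing Implicit Defensive.

Section Part1.

Section Tree.
Variables (n : nat) (parent : 'I_n -> option 'I_n) (d : 'I_n -> nat).
Hypothesis Hd : forall i j, parent i = Some j -> (d j < d i)%N.

Lemma itp_add a b i : itp parent (a + b) i = obind (itp parent a) (itp parent b i).
Proof.
elim: a => [|a IH] /=; first by case: (itp parent b i).
by rewrite IH; case: (itp parent b i).
Qed.

Lemma itp_Sr k i : itp parent k.+1 i = obind (itp parent k) (parent i).
Proof. by rewrite -addn1 itp_add. Qed.

Lemma itp_d m i j : itp parent m i = Some j -> (d j + m <= d i)%N.
Proof.
elim: m j => [|m IH] j /=; first by case=> ->; rewrite addn0.
case E: (itp parent m i) => [x|] //= Hp.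
have := IH x E; have := Hd Hp; lia.
Qed.

Lemma itp_nocycle m i : itp parent m.+1 i <> Some i.
Proof. by move/itp_d; lia. Qed.

Lemma itp_bound m i j : itp parent m i = Some j -> (m < n)%N.
Proof.
move=> H.
have Hs : forall k, (k <= m)%N -> exists x, itp parent k i = Some x.
  move=> k km; case E: (itp parent k i) => [x|]; first by exists x.
  by move: H; rewrite -(subnK km) itp_add E.
pose f (k : 'I_m.+1) : 'I_n := odflt i (itp parent k i).
have key : forall k1 k2 : 'I_m.+1, (k1 < k2)%N -> f k1 != f k2.
  move=> k1 k2 lt12.
  have [x1 E1] := Hs k1 (ltnSE (ltn_ord k1)).
  have [x2 E2] := Hs k2 (ltnSE (ltn_ord k2)).
  rewrite /f E1 E2 /=; apply/eqP => ex; subst x2.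
  move: E2; rewrite -(subnK (ltnW lt12)) itp_add E1 /= => /itp_d.
  lia.
have inj_f : injective f.
  move=> k1 k2 E; case: (ltngtP k1 k2) => [/key|/key|/val_inj //];
  by rewrite E eqxx.
by have := leq_card f inj_f; rewrite !card_ord.
Qed.

Lemma ancP j i : reflect (exists m, itp parent m.+1 i = Some j) (anc parent j i).
Proof.
apply: (iffP existsP) => [[k /eqP H]|[m H]]; first by exists k.
by exists (Ordinal (ltnW (itp_bound H))); apply/eqP.
Qed.

Lemma anc_parent o q : parent o = Some q ->
  forall j, anc parent j o = (j == q) || anc parent j q.
Proof.
move=> Hq j; apply/ancP/orP => [[m]|[/eqP->|/ancP[m Hm]]].
- rewrite itp_Sr Hq /=; case: m => [[->]|m Hm]; first by left.
  by right; apply/ancP; exists m.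
- by exists 0; rewrite itp_Sr Hq.
- by exists m.+1; rewrite itp_Sr Hq.
Qed.

Lemma anc_outer o j : parent o = None -> anc parent j o = false.
Proof. by move=> H; apply/ancP => [[m]]; rewrite itp_Sr H. Qed.

Lemma anc_irr i : anc parent i i = false.
Proof. by apply/ancP => [[m /itp_nocycle]]. Qed.

Lemma anc_trans a b c : anc parent a b -> anc parent b c -> anc parent a c.
Proof.
move=> /ancP[m1 H1] /ancP[m2 H2]; apply/ancP; exists (m1 + m2.+1).
by rewrite -addSn itp_add H2.
Qed.

Lemma depth_parent o q : parent o = Some q -> depth parent o = (depth parent q).+1.
Proof.
move=> Hq; rewrite /depth (eq_card (B := [predU1 q & [pred j | anc parent j q]])).
  by rewrite cardU1 inE anc_irr.
by move=> j; rewrite !inE (anc_parent Hq).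
Qed.

Lemma depth_outer o : parent o = None -> depth parent o = 0.
Proof. by move=> H; apply: eq_card0 => j; rewrite inE anc_outer. Qed.

Lemma anc_ex_itp o j : (j == o) || anc parent o j -> exists a, itp parent a j = Some o.
Proof. by case/orP => [/eqP->|/ancP[m H]]; [exists 0 | exists m.+1]. Qed.

Lemma chain_uniq a b j o o' : itp parent a j = Some o -> itp parent b j = Some o' ->
  parent o = parent o' -> o = o'.
Proof.
wlog ab : a b o o' / (a <= b)%N.
  move=> W Ha Hb Hp; case: (leqP a b) => [ab|/ltnW ba]; first exact: W Ha Hb Hp.
  by apply/esym; apply: W Hb Ha (esym Hp).
move=> Ha Hb Hp; case: (ltngtP a b) ab => // [lt|eab] _; last by move: Ha; rewrite eab Hb => -[].
move: Hb; rewrite -(subnK lt) itp_add.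
have -> : itp parent a.+1 j = parent o by rewrite /= Ha.
case Eo: (parent o) Hp => [q|] Hp //= Hb.
have : itp parent (b - a.+1).+1 q = Some q by rewrite /= Hb /= -Hp.
by move/itp_nocycle.
Qed.

Definition descO (r : option 'I_n) (j : 'I_n) : bool :=
  if r is Some i then anc parent i j else true.

Lemma child_ex r j : descO r j ->
  exists o, (parent o == r) && ((j == o) || anc parent o j).
Proof.
elim: {j}(d j) {-2}j (leqnn (d j)) r => [|k IH] j.
- rewrite leqn0 => /eqP dj r.
  case E: (parent j) => [y|]; first by have := Hd E; lia.
  case: r => [i|]; first by rewrite /= anc_outer.
  by exists j; rewrite E !eqxx.
- move=> dj r Hr.
  case E: (parent j) => [y|]; last first.
    case: r Hr => [i|] Hr; first by rewrite /= anc_outer in Hr.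
    by exists j; rewrite E !eqxx.
  case: (eqVneq r (Some y)) => [->|ne]; first by exists j; rewrite E !eqxx.
  have Hy : descO r y.
    case: r Hr ne => [i|] //= Hr ne; rewrite (anc_parent E) in Hr.
    by case/orP: Hr => // /eqP ei; rewrite ei eqxx in ne.
  have := Hd E => dy.
  have [o /andP[Ho Hj]] := IH y (ltnSE (leq_trans dy dj)) r Hy.
  exists o; rewrite Ho /= (anc_parent E).
  by case/orP: Hj => [/eqP->|->]; rewrite ?eqxx ?orbT.
Qed.

Lemma child_desc r o j : parent o == r -> (j == o) || anc parent o j -> descO r j.
Proof.
case: r => [i|] //= /eqP Ho Hj.
have Hio : anc parent i o by rewrite (anc_parent Ho) eqxx.
by case/orP: Hj => [/eqP->//|]; apply: anc_trans.
Qed.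

Lemma child_uniq r o o' j : parent o == r -> parent o' == r ->
  (j == o) || anc parent o j -> (j == o') || anc parent o' j -> o = o'.
Proof.
move=> /eqP H1 /eqP H2 /anc_ex_itp[a Ha] /anc_ex_itp[b Hb].
by apply: chain_uniq Ha Hb _; rewrite H1 H2.
Qed.

Local Open Scope ring_scope.
Lemma partition_desc (R : nmodType) (F : 'I_n -> R) r :
  \sum_(j | descO r j) F j =
  \sum_(o | parent o == r) (F o + \sum_(j | anc parent o j) F j).
Proof.
pose h j := odflt j [pick o | (parent o == r) && ((j == o) || anc parent o j)].
have hP j : descO r j -> (parent (h j) == r) && ((j == h j) || anc parent (h j) j).
  move=> Hj; rewrite /h; case: pickP => [o //|H0].
  by have [o Ho] := child_ex Hj; rewrite H0 in Ho.
rewrite (partition_big h (fun o => parent o == r)); last by move=> j /hP /andP[].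
apply: eq_bigr => o Ho.
rewrite (eq_bigl (fun j => (j == o) || anc parent o j)); last first.
  move=> j /=; apply/andP/idP => [[Hj /eqP <-]|Hj].
    by have /andP[_ ->] := hP j Hj.
  split; first exact: child_desc Ho Hj.
  have /andP[H1 H2] := hP j (child_desc Ho Hj).
  by apply/eqP; exact: child_uniq H1 Ho H2 Hj.
rewrite (bigD1 o) ?eqxx //=; congr (_ + _); apply: eq_bigl => j.
by case: eqVneq => [->|_]; rewrite ?anc_irr ?andbT.
Qed.


Lemma leaf_ind (P : 'I_n -> Prop) :
  (forall i, (forall o, parent o = Some i -> P o) -> P i) -> forall i, P i.
Proof.
move=> IH; pose M := (\max_(j : 'I_n) d j)%N.
suff H : forall k i, (M - d i <= k)%N -> P i by move=> i; exact: H _ i (leqnn _).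
elim=> [|k IHk] i Hi; apply: IH => o Ho; have := Hd Ho;
  have : (d o <= M)%N := leq_bigmax o.
- lia.
- move=> h1 h2; apply: IHk; lia.
Qed.

Lemma root_ind (P : 'I_n -> Prop) :
  (forall i, (forall q, parent i = Some q -> P q) -> P i) -> forall i, P i.
Proof.
move=> IH i; elim: {i}(d i) {-2}i (leqnn (d i)) => [|k IHk] i Hi; apply: IH => q Hq;
  have := Hd Hq.
- lia.
- move=> h; apply: IHk; lia.
Qed.

End Tree.

End Part1.

Section Part2.
Local Open Scope ring_scope.

Definition o0 : 'I_3 := @Ordinal 3 0 isT.
Definition o1 : 'I_3 := @Ordinal 3 1 isT.
Definition o2 : 'I_3 := @Ordinal 3 2 isT.

Lemma I3_cases (a : 'I_3) : [\/ a = o0, a = o1 | a = o2].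
Proof.
case: a => [[|[|[|m]]] H]; last by [].
- by constructor 1; apply: val_inj.
- by constructor 2; apply: val_inj.
- by constructor 3; apply: val_inj.
Qed.

Section Lin.
Variables (n : nat) (parent : 'I_n -> option 'I_n) (eps : 'I_n -> bool).

Lemma sum_vertex (F : vertex n -> rat) :
  \sum_(v : vertex n) F v = \sum_(r : option 'I_n) F (Reg r) + \sum_(o : 'I_n) F (Ov o)
     + \sum_(a : 'I_3) F (U a).
Proof.
have bij : {on [pred v : vertex n | true], bijective (@vdecode n)}.
  by apply: onW_bij; exists (@vcode n); [case => [[]|] | exact: vcodeK].
by rewrite (reindex (@vdecode n) bij) big_sumType big_sumType.
Qed.

Lemma sum_option (F : option 'I_n -> rat) : \sum_r F r = F None + \sum_i F (Some i).
Proof.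
rewrite (bigD1 None) //=; congr (_ + _).
rewrite (reindex_omap Some id) /=; last by case.
by apply: eq_bigl => i; rewrite eqxx.
Qed.

Lemma sum_I3 (F : 'I_3 -> rat) : \sum_a F a = F o0 + F o1 + F o2.
Proof.
rewrite !big_ord_recl big_ord0 addr0 addrA; congr (_ + _ + _); congr F; exact: val_inj.
Qed.

Lemma adj_irr v : adj parent v v = false.
Proof. by case: v => [[]|o|a] //=; case: (isU0 a). Qed.

Lemma AG_entry (y : 'rV[rat]_(NV n)) w :
  (y *m AGamma parent) 0 (enum_rank w) =
  (weight parent w)%:~R * y 0 (enum_rank w) + \sum_(v | adj parent v w) y 0 (enum_rank v).
Proof.
rewrite mxE (reindex (@enum_rank _)); last first.
  by apply: onW_bij; exists enum_val; [exact: enum_rankK | exact: enum_valK].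
rewrite (bigD1 w) //= mxE !enum_rankK eqxx; congr (_ + _); first by rewrite mulrC.
rewrite [LHS]big_mkcond [RHS]big_mkcond; apply: eq_bigr => v _ /=.
rewrite mxE !enum_rankK; case: eqVneq => [->|_]; first by rewrite adj_irr.
by case: adj; rewrite ?mulr1 ?mulr0.
Qed.

End Lin.

End Part2.

Section Part3.
Local Open Scope ring_scope.

Section Nbr.
Variables (n : nat) (parent : 'I_n -> option 'I_n) (Y : vertex n -> rat).

Lemma nbr_Ov o : parent o <> Some o ->
  \sum_(v | adj parent v (Ov o)) Y v = Y (Reg (parent o)) + Y (Reg (Some o)).
Proof.
move=> Hno; rewrite big_mkcond sum_vertex sum_option /= !big1_eq !addr0.
case E: (parent o) Hno => [q|] Hno /=.
- rewrite add0r (eq_bigr (fun i => (if i == o then Y (Reg (Some i)) else 0) +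
                                  (if i == q then Y (Reg (Some i)) else 0))).
    by rewrite big_split /= -!big_mkcond /= !big_pred1_eq addrC.
  move=> i _; rewrite !(eq_sym _ i) /=.
  have -> : (Some q == Some i) = (q == i) by apply/eqP/eqP => [[]|->].
  case: (eqVneq o i) => [eoi|noi]; case: (eqVneq q i) => [eqi|nqi];
    rewrite /= ?addr0 ?add0r //.
  by case: Hno; rewrite eoi eqi.
- rewrite -big_mkcond /= (big_pred1 o) //= => i; rewrite orbF eq_sym.
  by [].
Qed.


Lemma nbr_RegS i : parent i <> Some i ->
  \sum_(v | adj parent v (Reg (Some i))) Y v = Y (Ov i) + \sum_(o | parent o == Some i) Y (Ov o).
Proof.
move=> Hi; rewrite big_mkcond sum_vertex sum_option /= !big1_eq add0r !addr0 /=.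
rewrite -big_mkcond (bigD1 i) /= ?eqxx //; congr (_ + _); apply: eq_bigl => o.
case: (eqVneq o i) => [->|_] /=; last by rewrite andbT.
by apply/esym/eqP.
Qed.

Lemma nbr_R1 :
  \sum_(v | adj parent v (Reg None)) Y v = \sum_(o | parent o == None) Y (Ov o) + Y (U o0).
Proof.
rewrite big_mkcond sum_vertex sum_option /= !big1_eq sum_I3 /=.
by rewrite -big_mkcond !add0r !addr0.
Qed.

Lemma nbr_U0 :
  \sum_(v | adj parent v (U o0)) Y v = Y (Reg None) + Y (U o1) + Y (U o2).
Proof.
rewrite big_mkcond sum_vertex sum_option /= !big1_eq sum_I3 /=.
by rewrite !addr0 add0r !addrA.
Qed.

Lemma nbr_U1 a : a != o0 -> 
  \sum_(v | adj parent v (U a)) Y v = Y (U o0).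
Proof.
move=> Ha; rewrite big_mkcond sum_vertex sum_option /= !big1_eq sum_I3 /=.
have Ha' : isU0 a = false by case: (I3_cases a) Ha => ->.
by rewrite Ha' /= !addr0 !add0r.
Qed.
End Nbr.

End Part3.

Section Part4.
Local Open Scope ring_scope.

Section Main.
Variables (n : nat) (parent : 'I_n -> option 'I_n) (eps : 'I_n -> bool) (d : 'I_n -> nat).
Hypothesis Hd : forall i j, parent i = Some j -> (d j < d i)%N.

Lemma noself i : parent i <> Some i.
Proof. by move/Hd; rewrite ltnn. Qed.

Definition Yof (y : 'rV[rat]_(NV n)) (v : vertex n) := y 0 (enum_rank v).

Variables (y : 'rV[rat]_(NV n)) (lam : rat).
Hypothesis Hy : y *m AGamma parent = lam *: svec parent eps.
Local Notation Y := (Yof y).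

Lemma eq_at w : (weight parent w)%:~R * Y w + \sum_(v | adj parent v w) Y v =
  lam * (match w with Ov o => (asign parent eps o)%:~R | _ => 0 end).
Proof. by rewrite -AG_entry Hy !mxE enum_rankK. Qed.

Lemma E_U0 : Y (U o0) + (Y (Reg None) + Y (U o1) + Y (U o2)) = 0.
Proof. by have := eq_at (U o0); rewrite nbr_U0 mulr0 /= mul1r. Qed.

Lemma E_U a : a != o0 -> 2 * Y (U a) + Y (U o0) = 0.
Proof.
move=> Ha; have := eq_at (U a); rewrite nbr_U1 // mulr0 /=.
by case: (I3_cases a) Ha => ->.
Qed.

Lemma Y_R1 : Y (Reg None) = 0.
Proof.
have := E_U0; have := E_U (a := o1) isT; have := E_U (a := o2) isT; lra.
Qed.

Lemma E_Ov o : Y (Reg (parent o)) + Y (Reg (Some o)) = lam * (asign parent eps o)%:~R.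
Proof. by have := eq_at (Ov o); rewrite nbr_Ov ?mul0r ?add0r //; apply: noself. Qed.

Lemma E_RegS i : 2 * (1 - (#|[pred o | parent o == Some i]|)%:R) * Y (Reg (Some i))
  + (Y (Ov i) + \sum_(o | parent o == Some i) Y (Ov o)) = 0.
Proof.
have := eq_at (Reg (Some i)); rewrite nbr_RegS ?mulr0; last exact: noself.
by rewrite /= rmorphM rmorphB /=.
Qed.

Lemma E_R1 : \sum_(o | parent o == None) Y (Ov o) + Y (U o0) = 0.
Proof.
by have := eq_at (Reg None); rewrite nbr_R1 mulr0 Y_R1 mulr0 add0r.
Qed.

End Main.

End Part4.

Section Part5.
Local Open Scope ring_scope.

Section Kernel.
Variables (n : nat) (parent : 'I_n -> option 'I_n) (eps : 'I_n -> bool) (d : 'I_n -> nat).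
Hypothesis Hd : forall i j, parent i = Some j -> (d j < d i)%N.

Lemma Y_zero (y : 'rV[rat]_(NV n)) : y *m AGamma parent = 0 -> forall v, Yof y v = 0.
Proof.
move=> Hy0.
have Hy : y *m AGamma parent = 0 *: svec parent eps by rewrite scale0r.
have HR1 := Y_R1 Hy.
have HR : forall i, Yof y (Reg (Some i)) = 0.
  apply: (root_ind Hd) => i IH; have := E_Ov Hd Hy i; rewrite mul0r.
  case E: (parent i) => [q|]; last by rewrite HR1 add0r.
  by rewrite (IH q) // add0r.
have HO : forall i, Yof y (Ov i) = 0.
  apply: (leaf_ind Hd) => i IH; have := E_RegS Hd Hy i.
  by rewrite HR mulr0 add0r big1 ?addr0 // => o /eqP /IH.
have Hu0 : Yof y (U o0) = 0.
  by have := E_R1 Hy; rewrite big1 ?add0r // => o _; apply: HO.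
case=> [[i|]|o|a]; [exact: HR | exact: HR1 | exact: HO |].
case: (eqVneq a o0) => [->//|Ha].
by have := E_U Hy Ha; rewrite Hu0 addr0 => /eqP; rewrite mulf_eq0 /= => /eqP.
Qed.

Lemma AG_unit : AGamma parent \in unitmx.
Proof.
rewrite unitmxE unitfE; apply/det0P => -[v nz Hv].
apply: (negP nz); apply/eqP/rowP => j; rewrite [RHS]mxE -(enum_valK j).
exact: (Y_zero Hv).
Qed.

Lemma cvecA : cvec parent eps *m AGamma parent = (-2) *: svec parent eps.
Proof. by rewrite /cvec -scalemxAl mulmxKV //; exact: AG_unit. Qed.

End Kernel.

End Part5.

Section Part6.
Local Open Scope ring_scope.

Section Wclaim.
Variables (n : nat) (parent : 'I_n -> option 'I_n) (eps : 'I_n -> bool) (d : 'I_n -> nat).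
Hypothesis Hd : forall i j, parent i = Some j -> (d j < d i)%N.
Variables (y : 'rV[rat]_(NV n)).
Hypothesis Hy : y *m AGamma parent = (-2) *: svec parent eps.
Local Notation Y := (Yof y).

Definition DescZ i : int := \sum_(j | anc parent i j) epsZ eps j.
Local Notation a i := ((asign parent eps i)%:~R : rat).
Local Notation e i := ((epsZ eps i)%:~R : rat).
Local Notation sg i := (((-1) ^+ depth parent i) : rat).
Definition W i := Y (Ov i) + 2 * Y (Reg (Some i)) + 4 * a i.

Lemma sg_a i : sg i * a i = - e i.
Proof.
rewrite /asign rmorphM /= rmorphXn /= rmorphN1 exprS.
by rewrite mulN1r mulNr mulrN signrMK.
Qed.

Lemma sg_child o i : parent o = Some i -> sg o = - sg i.
Proof. by move/(depth_parent Hd)->; rewrite exprS mulN1r. Qed.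

Lemma Wclaim i : sg i * W i = -4 * (epsZ eps i + DescZ i)%:~R.
Proof.
elim/(leaf_ind Hd): i => i IH.
have HT : forall o, parent o == Some i -> Y (Ov o) = W o + 2 * Y (Reg (Some i)).
  move=> o /eqP Ho; have := E_Ov Hd Hy o; rewrite Ho /W.
  lra.
have HS := E_RegS Hd Hy i.
have Hk : \sum_(o | parent o == Some i) (2 * Y (Reg (Some i))) =
   (#|[pred o | parent o == Some i]|)%:R * (2 * Y (Reg (Some i))).
  by rewrite sumr_const (eq_card (B := [pred o | parent o == Some i])) ?mulr_natl.

rewrite (eq_bigr _ HT) big_split /= Hk in HS.
have HW : W i = 4 * a i - \sum_(o | parent o == Some i) W o.
  rewrite /W; lra.
have HC : \sum_(o | parent o == Some i) sg i * W o =
          \sum_(o | parent o == Some i) 4 * (epsZ eps o + DescZ o)%:~R.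
  apply: eq_bigr => o /eqP Ho; have := IH o Ho; rewrite (sg_child Ho) => H.
  by rewrite -[LHS]opprK -mulNr H mulNr opprK.
have HP : \sum_(o | parent o == Some i) (epsZ eps o + DescZ o) = DescZ i.
  exact: (esym (partition_desc Hd (epsZ eps) (Some i))).
rewrite HW mulrBr mulrCA sg_a mulr_sumr HC -mulr_sumr -rmorph_sum HP rmorphD /=.
lra.
Qed.

End Wclaim.

End Part6.

Section Part7.
Local Open Scope ring_scope.

Section Counting.
Variables (n : nat) (parent : 'I_n -> option 'I_n) (eps : 'I_n -> bool) (d : 'I_n -> nat).
Hypothesis Hd : forall i j, parent i = Some j -> (d j < d i)%N.

Lemma sum_epsZ (P : pred 'I_n) : \sum_(j | P j) epsZ eps j =
  (#|[pred j | P j && eps j]|)%:Z - (#|[pred j | P j && ~~ eps j]|)%:Z.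
Proof.
rewrite (bigID (fun j => eps j)) /=.
rewrite (eq_bigr (fun _ => 1)); last by move=> j /andP[_]; rewrite /epsZ => ->.
rewrite [X in _ + X](eq_bigr (fun _ => -1)); last by move=> j /andP[_]; rewrite /epsZ => /negbTE ->.
rewrite !sumr_const (eq_card (B := [pred j | P j && eps j])) //.
rewrite [X in _ + _ *+ X](eq_card (B := [pred j | P j && ~~ eps j])) //.
by rewrite mulNrn !natz.
Qed.

Lemma sum_all_eps : \sum_j epsZ eps j = (Lambda_pos eps)%:Z - (Lambda_neg eps)%:Z.
Proof. by rewrite (sum_epsZ predT). Qed.

Lemma Pi_outer o : parent o = None ->
  (Pi_pos parent eps o)%:Z - (Pi_neg parent eps o)%:Z = - epsZ eps o * DescZ parent eps o.
Proof.
move=> Ho; rewrite /DescZ sum_epsZ /Pi_pos /Pi_neg.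
have C : forall b, #|[pred j | anc parent o j && (eps j == b)]| =
   if b then #|[pred j | anc parent o j && eps j]| else #|[pred j | anc parent o j && ~~ eps j]|.
  by case; apply: eq_card => j; rewrite !inE; case: (eps j).
have Hpos : #|[pred o' | positive_pair parent eps o o']| =
    #|[pred j | anc parent o j && (eps j == ~~ eps o)]|.
  apply: eq_card => j; rewrite !inE /positive_pair /injective_pair (anc_outer Hd _ Ho) orbF.
  by case: (eps j); case: (eps o).
have Hneg : #|[pred o' | negative_pair parent eps o o']| =
    #|[pred j | anc parent o j && (eps j == eps o)]|.
  apply: eq_card => j; rewrite !inE /negative_pair /injective_pair (anc_outer Hd _ Ho) orbF.
  by case: (eps j); case: (eps o).
rewrite Hpos Hneg !C /epsZ; case: (eps o) => /=; rewrite ?mulN1r ?mul1r ?opprK ?opprB //.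
Qed.

End Counting.

End Part7.

Section Part8.
Local Open Scope ring_scope.

Section Cvals.
Variables (n : nat) (parent : 'I_n -> option 'I_n) (eps : 'I_n -> bool) (d : 'I_n -> nat).
Hypothesis Hd : forall i j, parent i = Some j -> (d j < d i)%N.
Let Hy := cvecA eps Hd.
Local Notation Y := (Yof (cvec parent eps)).
Definition DZ : int := (Lambda_pos eps)%:Z - (Lambda_neg eps)%:Z.

Lemma c_R1 : c parent eps R1 = 0.
Proof. exact: (Y_R1 Hy). Qed.

Lemma c_outer o : parent o = None ->
  c parent eps (Ov o) = ((-4) * (epsZ eps o + DescZ parent eps o))%:~R.
Proof.
move=> Ho; have := Wclaim Hd Hy o; rewrite (depth_outer Hd Ho) expr0 mul1r /W.
have := E_Ov Hd Hy o; rewrite Ho (Y_R1 Hy) add0r rmorphM /=.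
rewrite /c -/(Yof _ (Ov o)). lra.
Qed.

Lemma c_u1 : c parent eps u1 = (4 * DZ)%:~R.
Proof.
have := E_R1 Hy; rewrite (eq_bigr _ (fun o (Ho : parent o == None) => c_outer (eqP Ho))).
rewrite -rmorph_sum -mulr_sumr.
have HP := partition_desc Hd (epsZ eps) None.
rewrite /descO in HP.
rewrite -HP sum_all_eps -/DZ rmorphM /= rmorphM /=.
rewrite /c -/(Yof _ (U o0)) /u1 -/o0. lra.
Qed.

Lemma c_U a : a != o0 -> c parent eps (U a) = (-2 * DZ)%:~R.
Proof.
move=> Ha; have := E_U Hy Ha; have := c_u1; rewrite /c /u1 -/o0 !rmorphM /=.
rewrite -/(Yof _ (U o0)) -/(Yof _ (U a)); lra.
Qed.

End Cvals.

End Part8.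

Section Part9.
Local Open Scope ring_scope.

Section NT.
Variables (p : nat) (Hp : prime p) (Hodd : odd p).

Lemma p_gt2 : (2 < p)%N.
Proof.
have := prime_gt1 Hp; case: p Hodd => [|[|[|q]]] //.
Qed.

Lemma p_ndvd1 : ~~ (p %| 1)%N.
Proof. by apply/negP => /dvdn_leq -/(_ isT); have := p_gt2; lia. Qed.

Lemma p_ndvd2 : ~~ (p %| 2)%N.
Proof. by apply/negP => /dvdn_leq -/(_ isT); have := p_gt2; lia. Qed.

Lemma p_ndvd4 : ~~ (p %| 4)%N.
Proof. by rewrite (Euclid_dvdM 2 2 Hp) orbb p_ndvd2. Qed.

Lemma zm (z : int) : zero_mod p (z%:~R) = (p%:Z %| z)%Z.
Proof. by rewrite /zero_mod numq_int. Qed.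

Lemma dvdM (k z : int) : ~~ (p %| `|k|)%N -> (p%:Z %| k * z)%Z = (p%:Z %| z)%Z.
Proof. by move=> Hk; rewrite !dvdzE abszM /= (Euclid_dvdM _ _ Hp) (negbTE Hk). Qed.

End NT.

Section Final.
Variables (n : nat) (parent : 'I_n -> option 'I_n) (eps : 'I_n -> bool) (d : 'I_n -> nat).
Hypothesis Hd : forall i j, parent i = Some j -> (d j < d i)%N.
Variables (p : nat) (Hp : prime p) (Hodd : odd p).

Local Notation inZ := (inZ parent eps p).
Local Notation c := (c parent eps).

Lemma absz_eps o : (`|epsZ eps o|)%N = 1%N.
Proof. by rewrite /epsZ; case: (eps o). Qed.

Lemma ov_notZ o : ~~ inZ (Ov o).
Proof.
rewrite /inZ; apply/nandP; right; apply/negP => /forallP /(_ (inr o)).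
rewrite /= eqxx /= zm dvdM ?p_ndvd2 // dvdzE /asign abszMsign absz_eps.
by move=> H; have := p_ndvd1 Hp Hodd; rewrite H.
Qed.

Lemma cU_zero a : zero_mod p (c (U a)) = (p%:Z %| DZ eps)%Z.
Proof.
case: (eqVneq a o0) => [->|Ha].
  by rewrite (c_u1 eps Hd) zm dvdM ?p_ndvd4.
by rewrite (c_U eps Hd Ha) zm dvdM ?p_ndvd2.
Qed.

Lemma c_R1z : zero_mod p (c R1) = true.
Proof. by rewrite (c_R1 eps Hd) /zero_mod /= dvdz0. Qed.

Lemma inZ_U a : (p%:Z %| DZ eps)%Z -> inZ (U a).
Proof.
move=> HD; rewrite /inZ cU_zero HD /=; apply/forallP => -[[[i|]|o|b]|o] //=.
- by rewrite c_R1z implybT.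
- by rewrite cU_zero HD implybT.
Qed.

Lemma R1_char : inZ R1 <-> (forall o, outer parent o -> zero_mod p (c (Ov o))) /\
                             (p%:Z %| DZ eps)%Z.
Proof.
rewrite /inZ c_R1z /=; split.
- move=> /forallP H; split.
    by move=> o Ho; have := H (inl (Ov o)); rewrite /= -/(outer parent o) Ho.
  by have := H (inl (U o0)); rewrite /= cU_zero.
- move=> [HO HD]; apply/forallP => -[[[i|]|o|b]|o] //=.
  + by apply/implyP => /HO.
  + by rewrite cU_zero HD implybT.
Qed.


Lemma outer_cond o : outer parent o -> zero_mod p (c (Ov o)) =
  ((Pi_pos parent eps o)%:Z - (Pi_neg parent eps o)%:Z == 1 %[mod p%:Z])%Z.
Proof.
move=> /eqP Ho; rewrite (c_outer eps Hd Ho) zm (dvdM Hp); last by rewrite /= (p_ndvd4 Hp Hodd).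
rewrite eqz_mod_dvd (Pi_outer eps Hd Ho).
have -> : - epsZ eps o * DescZ parent eps o - 1 = (- epsZ eps o) * (epsZ eps o + DescZ parent eps o).
  by rewrite /epsZ; case: (eps o); rewrite /= ?mulN1r ?mul1r ?opprK ?mulNr ?mul1r; lia.
rewrite [RHS](dvdM Hp) // abszN absz_eps; exact: (p_ndvd1 Hp Hodd).
Qed.

End Final.




End Part9.

End Aux.
Import Aux.
Unset Implicit Arguments.
Set Strict Implicit.

Theorem proposition1p9 (n : nat) (parent : 'I_n -> option 'I_n) (eps : 'I_n -> bool)
  (Hforest : exists d : 'I_n -> nat, forall i j, parent i = Some j -> (d j < d i)%N)
  (p : nat) (Hp : prime p) (Hodd : odd p) :
  (Lambda_neg eps <> Lambda_pos eps %[mod p] ->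
     (forall v w : vertex n, ~~ Zedge parent eps p v w) /\
     (forall v : vertex n, inZ parent eps p v -> exists i, v = Reg (Some i)))
  /\
  (Lambda_neg eps = Lambda_pos eps %[mod p] ->
     [/\ [/\ inZ parent eps p u1, inZ parent eps p u2 & inZ parent eps p u3],
         Zedge parent eps p u1 u2 /\ Zedge parent eps p u1 u3,
         (inZ parent eps p R1 /\ Zedge parent eps p u1 R1 <->
            (forall o : 'I_n, outer parent o ->
               ((Pi_pos parent eps o)%:Z - (Pi_neg parent eps o)%:Z == 1 %[mod p%:Z])%Z)),
         (forall v w : vertex n, Zedge parent eps p v w ->
            [set v; w] \in [:: [set u1; u2]; [set u1; u3]; [set u1; R1]]) &
         (forall v : vertex n, inZ parent eps p v ->
            v \in [:: u1; u2; u3; R1] \/ exists i, v = Reg (Some i))]).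
Proof.
case: Hforest => d Hd.
have HD : (Lambda_neg eps = Lambda_pos eps %[mod p]) <-> (p%:Z %| DZ eps)%Z.
  rewrite /DZ -eqz_mod_dvd !modz_nat eqz_nat; split => [->//|/eqP//].
split.
- move=> Hn.
  have nD : ~ (p%:Z %| DZ eps)%Z by move/HD.
  have HV : forall v : vertex n, inZ parent eps p v -> exists i, v = Reg (Some i).
    case=> [[i|]|o|a] H; first by exists i.
    + by case: nD; case/(R1_char eps Hd Hp Hodd): H.
    + by rewrite (negbTE (ov_notZ parent eps Hp Hodd o)) in H.
    + by case: nD; move: H; rewrite /inZ (cU_zero eps Hd Hp Hodd) => /andP[].
  split => // v w; apply/negP => /and3P[Hv Hw Ha].
  by have [i Ev] := HV v Hv; have [j Ew] := HV w Hw; rewrite Ev Ew in Ha.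
- move=> /HD HDz.
  have U1 := inZ_U Hd Hp Hodd o0 HDz.
  have U2 := inZ_U Hd Hp Hodd o1 HDz.
  have U3 := inZ_U Hd Hp Hodd o2 HDz.
  split.
  + by split.
  + by rewrite /Zedge U1 U2 U3.
  + split.
    * move=> [/(R1_char eps Hd Hp Hodd) [HO _] _] o Ho.
      by rewrite -(outer_cond eps Hd Hp Hodd Ho); apply: HO.
    * move=> H.
      have HR : inZ parent eps p R1.
        apply/(R1_char eps Hd Hp Hodd); split => // o Ho.
        by rewrite (outer_cond eps Hd Hp Hodd Ho); apply: H.
      by split => //; rewrite /Zedge U1 HR.
  + move=> v w /and3P[Hv Hw Ha].
    have NO := ov_notZ parent eps Hp Hodd.
    case: v Hv Ha => [[i|]|o|a] Hv Ha; case: w Hw Ha => [[j|]|o'|b] Hw Ha //=;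
      try by move: Hv Hw; rewrite ?(negbTE (NO _)).
    * by case: (I3_cases b) Ha => -> // _; rewrite !inE setUC eqxx !orbT.
    * by case: (I3_cases a) Ha => -> // _; rewrite !inE eqxx !orbT.
    * case: (I3_cases a) Ha => ->; case: (I3_cases b) => -> //= _;
        rewrite !inE ?eqxx ?orbT //; by rewrite setUC eqxx ?orbT.
  + have NO := ov_notZ parent eps Hp Hodd.
    case=> [[i|]|o|a] H; first by right; exists i.
    * by left; rewrite !inE eqxx !orbT.
    * by rewrite (negbTE (NO o)) in H.
    * by left; case: (I3_cases a) => ->; rewrite !inE eqxx ?orbT.
Qed.
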